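(* If $\lambda$ is weakly compact, then $\lambda$ satisfies the strong system property.
   Context: Let $\lambda$ be an infinite regular cardinal. A relation $R$ is tree-like if $a<_R c$ and $b<_R c$ imply $a,b$ are $R$-comparable ($a=b$, $a<_Rb$ or $b<_Ra$). A $\lambda$-system is $S=\langle\{\{\alpha\}\times\kappa_\alpha\mid\alpha\in I\},\mathcal{R}\rangle$ with $I\subseteq\lambda$ unbounded, $0<\kappa_\alpha<\lambda$, levels $S_\alpha=\{\alpha\}\times\kappa_\alpha$ (and $S$ also denotes their union), $\mathcal{R}$ a set of binary transitive tree-like relations on $S$ with $|\mathcal{R}|<\lambda$, such that $(\alpha_0,\beta_0)<_R(\alpha_1,\beta_1)$ implies $\alpha_0<\alpha_1$, and for all $\alpha_0<\alpha_1$ in $I$ some elements of $S_{\alpha_0}$, $S_{\alpha_1}$ are related by some $R\in\mathcal{R}$. It is strong if for all $\alpha_0<\alpha_1$ in $I$ and every $\beta_1<\kappa_{\alpha_1}$ there are $\beta_0<\kappa_{\alpha_0}$ and $R\in\mathcal{R}$ with $(\alpha_0,\beta_0)<_R(\alpha_1,\beta_1)$. $\langle I\times\kappa,\mathcal{R}\rangle$ denotes a system with all $\kappa_\alpha=\kappa$. A branch through $R$ is a set of pairwise $R$-comparable elements; it is cofinal if it meets $S_\alpha$ for unboundedly many $\alpha\in I$. $\lambda$ satisfies the strong system property if every strong $\lambda$-system $S=\langle I\times\kappa,\mathcal{R}\rangle$ with $|\mathcal{R}|^+<\lambda$ has a cofinal branch. *)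

(* Defs.v *)
(* Ordinals below lambda are modelled as elements of a type L
   carrying a strict well-order [lt]; lambda itself is the order type of L. *)
From Stdlib Require Import Classical.

Set Implicit Arguments.

Definition seg {L : Type} (lt : L -> L -> Prop) (x : L) : Type := {y : L | lt y x}.

Definition inj_into (A B : Type) : Prop :=
  exists f : A -> B, forall a b, f a = f b -> a = b.

Definition le_of {L : Type} (lt : L -> L -> Prop) (x y : L) : Prop := lt x y \/ x = y.

Definition is_wellorder {L : Type} (lt : L -> L -> Prop) : Prop :=
  well_founded lt /\
  (forall x y z, lt x y -> lt y z -> lt x z) /\
  (forall x y, lt x y \/ x = y \/ lt y x).

Definition is_cardinal_type {L : Type} (lt : L -> L -> Prop) : Prop :=
  forall x : L, ~ inj_into L (seg lt x).

Definition is_cardinal_below {L : Type} (lt : L -> L -> Prop) (k : L) : Prop :=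
  forall j, lt j k -> ~ inj_into (seg lt k) (seg lt j).

(* lambda is weakly compact: lambda is an uncountable cardinal and
   lambda -> (lambda)^2_2 *)
Definition weakly_compact {L : Type} (lt : L -> L -> Prop) : Prop :=
  is_wellorder lt /\ is_cardinal_type lt /\
  (exists x : L, inj_into nat (seg lt x)) /\
  (forall c : L -> L -> bool,
     exists (H : L -> Prop) (col : bool),
       inj_into L {x : L | H x} /\
       (forall x y, H x -> H y -> lt x y -> c x y = col)).

(* A strong lambda-system <I x kappa, R>, with R = { rel r | r < rho }.
   Elements of the system are pairs (alpha, beta) with I alpha and beta < kappa. *)
Section Systems.
Variables (L : Type) (lt : L -> L -> Prop).

Definition in_sys (I : L -> Prop) (kappa : L) (p : L * L) : Prop :=
  I (fst p) /\ lt (snd p) kappa.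

Definition strong_system (I : L -> Prop) (kappa rho : L)
  (rel : seg lt rho -> L * L -> L * L -> Prop) : Prop :=
  (forall g, exists a, I a /\ le_of lt g a) /\
  (exists b, lt b kappa) /\ is_cardinal_below lt kappa /\
  (forall r p q s, in_sys I kappa p -> in_sys I kappa q -> in_sys I kappa s ->
     rel r p q -> rel r q s -> rel r p s) /\
  (forall r a b c, in_sys I kappa a -> in_sys I kappa b -> in_sys I kappa c ->
     rel r a c -> rel r b c -> a = b \/ rel r a b \/ rel r b a) /\
  (forall r p q, in_sys I kappa p -> in_sys I kappa q -> rel r p q ->
     lt (fst p) (fst q)) /\
  (forall a0 a1, I a0 -> I a1 -> lt a0 a1 ->
     exists b0 b1 r, lt b0 kappa /\ lt b1 kappa /\ rel r (a0, b0) (a1, b1)) /\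
  (forall a0 a1 b1, I a0 -> I a1 -> lt a0 a1 -> lt b1 kappa ->
     exists b0 r, lt b0 kappa /\ rel r (a0, b0) (a1, b1)).

(* |R|^+ < lambda : some mu < lambda has cardinality > |rho| *)
Definition succ_card_below (rho : L) : Prop :=
  exists mu : L, ~ inj_into (seg lt mu) (seg lt rho).

Definition has_cofinal_branch (I : L -> Prop) (kappa rho : L)
  (rel : seg lt rho -> L * L -> L * L -> Prop) : Prop :=
  exists (r : seg lt rho) (br : L * L -> Prop),
    (forall p, br p -> in_sys I kappa p) /\
    (forall p q, br p -> br q -> p = q \/ rel r p q \/ rel r q p) /\
    (forall g, exists a b, le_of lt g a /\ br (a, b)).

End Systems.

Definition strong_system_property {L : Type} (lt : L -> L -> Prop) : Prop :=
  forall (I : L -> Prop) (kappa rho : L) (rel : seg lt rho -> L * L -> L * L -> Prop),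
    @strong_system L lt I kappa rho rel -> @succ_card_below L lt rho ->
    @has_cofinal_branch L lt I kappa rho rel.

(* Main.v *)
Require Import Defs.
From Stdlib Require Import Classical ClassicalEpsilon Wellfounded.Inverse_Image.

Lemma my_choice {A B : Type} (P : A -> B -> Prop) :
  (forall a, exists b, P a b) -> exists f : A -> B, forall a, P a (f a).
Proof.
  intros H. exists (fun a => proj1_sig (constructive_indefinite_description _ (H a))).
  intros a. exact (proj2_sig (constructive_indefinite_description _ (H a))).
Qed.

Lemma seg_eq {L} (lt : L -> L -> Prop) x (a b : seg lt x) : proj1_sig a = proj1_sig b -> a = b.
Proof.
  destruct a as [a pa], b as [b pb]; simpl; intros E; subst b.
  rewrite (proof_irrelevance _ pa pb); reflexivity.
Qed.

Lemma sig_eq' {L} (S : L -> Prop) (a b : {x | S x}) : proj1_sig a = proj1_sig b -> a = b.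
Proof.
  destruct a as [a pa], b as [b pb]; simpl; intros E; subst b.
  rewrite (proof_irrelevance _ pa pb); reflexivity.
Qed.

Lemma wf_irrefl {A} (R : A -> A -> Prop) : well_founded R -> forall x, ~ R x x.
Proof.
  intros W x. induction (W x) as [x _ IH]. intros Hx. exact (IH x Hx Hx).
Qed.

Lemma wf_asym {A} (R : A -> A -> Prop) : well_founded R -> forall x y, R x y -> ~ R y x.
Proof.
  intros W x. induction (W x) as [x _ IH]. intros y Hxy Hyx. exact (IH y Hyx x Hyx Hxy).
Qed.

Lemma wf_min {A} (R : A -> A -> Prop) : well_founded R -> forall P : A -> Prop,
  (exists x, P x) -> exists m, P m /\ forall y, P y -> ~ R y m.
Proof.
  intros W P [x Px]. apply NNPP; intros N.
  assert (forall z, ~ P z) as Z.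
  { intros z. induction (W z) as [z _ IH]. intros Pz. apply N. exists z. split; auto.
    intros y Py Ry. exact (IH y Ry Py). }
  exact (Z x Px).
Qed.

Definition unb {L} (lt : L -> L -> Prop) (H : L -> Prop) : Prop :=
  forall g, exists a, H a /\ lt g a.

Definition PH {L} (lt : L -> L -> Prop) (C : Type) : Prop :=
  forall (H : L -> Prop) (R : L -> C -> Prop), unb lt H ->
    (forall h, H h -> exists c, R h c) -> exists c, unb lt (fun h => H h /\ R h c).

Lemma le_lt_trans {L} (lt : L -> L -> Prop) : is_wellorder lt ->
  forall a b c, le_of lt a b -> lt b c -> lt a c.
Proof. intros [_ [T _]] a b c [H|H] H2; [eauto | subst; auto]. Qed.

Lemma lt_le_trans {L} (lt : L -> L -> Prop) : is_wellorder lt ->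
  forall a b c, lt a b -> le_of lt b c -> lt a c.
Proof. intros [_ [T _]] a b c H [H2|H2]; [eauto | subst; auto]. Qed.

Lemma not_lt_le {L} (lt : L -> L -> Prop) : is_wellorder lt ->
  forall a b, ~ lt a b -> le_of lt b a.
Proof.
  intros [_ [_ To]] a b N. destruct (To a b) as [H|[H|H]]; [tauto | right; auto | left; auto].
Qed.

Lemma mx2 {L} (lt : L -> L -> Prop) : is_wellorder lt ->
  forall a b, exists m, forall x, lt m x -> lt a x /\ lt b x.
Proof.
  intros WO a b. destruct WO as [W [T To]].
  destruct (To a b) as [H|[H|H]].
  - exists b; intros x Hx; split; eauto.
  - subst; exists b; auto.
  - exists a; intros x Hx; split; eauto.
Qed.

Lemma nomax {L} (lt : L -> L -> Prop) : is_wellorder lt -> is_cardinal_type lt ->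
  (exists x : L, inj_into nat (seg lt x)) -> forall x, exists y, lt x y.
Proof.
  intros WO CT [x0 [e He]] m. apply NNPP; intros N.
  assert (Hm : forall y, y <> m -> lt y m).
  { intros y Hy. destruct WO as [_ [_ To]]. destruct (To y m) as [H|[H|H]]; try tauto.
    exfalso; apply N; eauto. }
  set (E := fun n => proj1_sig (e n)).
  assert (EI : forall n n', E n = E n' -> n = n').
  { intros n n' H. apply He. apply seg_eq. exact H. }
  assert (Em : forall n, lt (E n) m).
  { intros n. pose proof (proj2_sig (e n)) as P. simpl in P. fold (E n) in P.
    destruct (classic (x0 = m)) as [X|X]; [subst; exact P|].
    destruct WO as [_ [T _]]. eapply T; [exact P| apply Hm; exact X]. }
  set (h := fun y => match excluded_middle_informative (y = m) with
     | left _ => E 0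
     | right _ => match excluded_middle_informative (exists n, y = E n) with
        | left p => E (S (proj1_sig (constructive_indefinite_description _ p)))
        | right _ => y end end).
  assert (hm : forall y, lt (h y) m).
  { intros y. unfold h. destruct (excluded_middle_informative (y = m)); auto.
    destruct (excluded_middle_informative _); auto. }
  assert (hs : forall y, (y = m /\ h y = E 0) \/
     (y <> m /\ exists n, y = E n /\ h y = E (S n)) \/
     (y <> m /\ (forall n, y <> E n) /\ h y = y)).
  { intros y. unfold h. destruct (excluded_middle_informative (y = m)) as [A|A]; [left; auto|].
    destruct (excluded_middle_informative (exists n, y = E n)) as [B|B].
    - destruct (constructive_indefinite_description _ B) as [k Hk]; simpl.
      right; left; split; eauto.
    - right; right; repeat split; auto. intros n Hn; apply B; eauto. }
  assert (hi : forall y y', h y = h y' -> y = y').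
  { intros y y' Q.
    destruct (hs y) as [[A1 B1]|[[A1 [n1 [C1 B1]]]|[A1 [C1 B1]]]];
    destruct (hs y') as [[A2 B2]|[[A2 [n2 [C2 B2]]]|[A2 [C2 B2]]]];
    rewrite ?B1, ?B2 in Q; try congruence;
    try (apply EI in Q; first [discriminate | injection Q; intros; subst; auto]);
    exfalso;
    match goal with
    | C : forall n, ?z <> E n, Q : E ?k = ?z |- _ => apply (C k); auto
    | C : forall n, ?z <> E n, Q : ?z = E ?k |- _ => apply (C k); auto
    end. }
  apply (CT m). exists (fun y => exist _ (h y) (hm y)).
  intros a b Q. apply hi. apply (f_equal (@proj1_sig _ _)) in Q. exact Q.
Qed.

Lemma unb_of_inj {L} (lt : L -> L -> Prop) : is_wellorder lt -> is_cardinal_type lt ->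
  (forall x, exists y, lt x y) ->
  forall S : L -> Prop, inj_into L {x | S x} -> unb lt S.
Proof.
  intros WO CT NM S [f Hf] g. apply NNPP; intros N.
  destruct (NM g) as [g' Hg'].
  assert (B : forall x, S x -> lt x g').
  { intros x Sx. apply (le_lt_trans lt WO x g g'); auto.
    apply (not_lt_le lt WO). intros Hx. apply N; eauto. }
  apply (CT g'). exists (fun y => exist _ (proj1_sig (f y)) (B _ (proj2_sig (f y)))).
  intros a b Q. apply Hf. apply sig_eq'. apply (f_equal (@proj1_sig _ _)) in Q. exact Q.
Qed.

Definition partition_prop {L} (lt : L -> L -> Prop) : Prop :=
  forall c : L -> L -> bool,
     exists (H : L -> Prop) (col : bool),
       inj_into L {x : L | H x} /\
       (forall x y, H x -> H y -> lt x y -> c x y = col).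

Lemma PH_seg {L} (lt : L -> L -> Prop) : is_wellorder lt -> is_cardinal_type lt ->
  (forall x, exists y, lt x y) -> partition_prop lt -> forall k, PH lt (seg lt k).
Proof.
  intros WO CT NM Part k H R HU HR. apply NNPP; intros N.
  assert (Hb : forall c : seg lt k, exists b, forall a, H a /\ R a c -> ~ lt b a).
  { intros c. apply NNPP; intros N2. apply N. exists c. intros g.
    apply NNPP; intros N3. apply N2. exists g. intros a Ha Hl. apply N3; eauto. }
  apply my_choice in Hb. destruct Hb as [bnd Hbnd].
  assert (Hk : forall x, exists c : seg lt k, exists h, H h /\ lt x h /\ R h c).
  { intros x. destruct (HU x) as [h [Hh Hxh]]. destruct (HR h Hh) as [c Hc]. eauto. }
  apply my_choice in Hk. destruct Hk as [blk Hblk].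
  assert (Lb : forall x, lt x (bnd (blk x))).
  { intros x. destruct (Hblk x) as [h [Hh [Hxh Hr]]].
    apply (lt_le_trans lt WO x h); auto. apply (not_lt_le lt WO). apply Hbnd; auto. }
  set (c := fun x y => if excluded_middle_informative (blk x = blk y) then true else false).
  destruct (Part c) as [S [col [[f Hf] Hom]]].
  assert (Tot : forall x y, S x -> S y -> x <> y -> c x y = col \/ c y x = col).
  { intros x y Sx Sy Nxy. destruct WO as [_ [_ To]].
    destruct (To x y) as [A|[A|A]]; [left; auto| tauto | right; auto]. }
  destruct col.
  - set (x0 := proj1_sig (f k)).
    assert (S0 : S x0) by exact (proj2_sig (f k)).
    assert (B : forall y, S y -> lt y (bnd (blk x0))).
    { intros y Sy. destruct (classic (y = x0)) as [E|E]; [subst; apply Lb|].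
      assert (blk y = blk x0) as E2.
      { destruct (Tot y x0 Sy S0 E) as [Q|Q]; unfold c in Q;
        destruct (excluded_middle_informative _); congruence. }
      rewrite <- E2; apply Lb. }
    apply (CT (bnd (blk x0))).
    exists (fun y => exist _ (proj1_sig (f y)) (B _ (proj2_sig (f y)))).
    intros a b Q. apply Hf. apply sig_eq'. apply (f_equal (@proj1_sig _ _)) in Q. exact Q.
  - apply (CT k). exists (fun y => blk (proj1_sig (f y))).
    intros a b Q. apply Hf. apply sig_eq'. apply NNPP; intros E.
    destruct (Tot _ _ (proj2_sig (f a)) (proj2_sig (f b)) E) as [Q2|Q2]; unfold c in Q2;
      destruct (excluded_middle_informative _); congruence.
Qed.

Lemma PH_prod {L} (lt : L -> L -> Prop) A B : PH lt A -> PH lt B -> PH lt (A * B).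
Proof.
  intros PA PB H R HU HR.
  destruct (PA H (fun h a => exists b, R h (a, b)) HU) as [a Ha].
  { intros h Hh. destruct (HR h Hh) as [[a b] Hc]. eauto. }
  destruct (PB (fun h => H h /\ exists b, R h (a, b)) (fun h b => R h (a, b)) Ha) as [b Hb].
  { intros h [_ [b Hb]]. eauto. }
  exists (a, b). intros g. destruct (Hb g) as [x [[[Hx _] Hr] Hl]]. eauto.
Qed.

Lemma unb_tail {L} (lt : L -> L -> Prop) : is_wellorder lt ->
  forall H m, unb lt H -> unb lt (fun h => H h /\ lt m h).
Proof.
  intros WO H m HU g. destruct (mx2 lt WO g m) as [z Hz].
  destruct (HU z) as [a [Ha Hl]]. destruct (Hz a Hl). eauto.
Qed.

Lemma PH_opt {L} (lt : L -> L -> Prop) A : is_wellorder lt -> PH lt A -> PH lt (option A).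
Proof.
  intros WO PA H R HU HR.
  destruct (classic (unb lt (fun h => H h /\ R h None))) as [U|U]; [eauto|].
  assert (exists g0, forall a, H a -> R a None -> ~ lt g0 a) as [g0 Hg0].
  { apply NNPP; intros N. apply U. intros g. apply NNPP; intros N2. apply N. exists g.
    intros a Ha Hr Hl. apply N2; eauto. }
  destruct (PA (fun h => H h /\ lt g0 h) (fun h a => R h (Some a)) (unb_tail lt WO H g0 HU))
    as [a Ha].
  { intros h [Hh Hl]. destruct (HR h Hh) as [[a|] Hc]; eauto. exfalso; eapply Hg0; eauto. }
  exists (Some a). intros g. destruct (Ha g) as [x [[[Hx _] Hr] Hl]]. eauto.
Qed.

Lemma bnd_seg {L} (lt : L -> L -> Prop) : is_wellorder lt ->
  (forall x, exists y, lt x y) -> (forall k, PH lt (seg lt k)) ->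
  forall al (bf : L -> L), exists B, forall a, lt a al -> lt (bf a) B.
Proof.
  intros WO NM PS al bf. apply NNPP; intros N.
  assert (U : unb lt (fun y => exists a, lt a al /\ y = bf a)).
  { intros g. destruct (NM g) as [g' Hg']. apply NNPP; intros N2. apply N. exists g'.
    intros a Ha. apply NNPP; intros N3. apply N2. exists (bf a). split; eauto.
    apply (lt_le_trans lt WO g g'); auto. apply (not_lt_le lt WO); auto. }
  destruct (PS al _ (fun y (xi : seg lt al) => y = bf (proj1_sig xi)) U) as [xi Hxi].
  { intros h [a [Ha E]]. exists (exist _ a Ha). exact E. }
  destruct (Hxi (bf (proj1_sig xi))) as [y [[_ E] Hl]]. subst y.
  exact (wf_irrefl lt (proj1 WO) _ Hl).
Qed.

Lemma transfer {L} (lt : L -> L -> Prop) : is_wellorder lt -> is_cardinal_type lt ->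
  (forall x, exists y, lt x y) -> partition_prop lt ->
  forall (G : L -> Prop) (col : L -> L -> bool), unb lt G ->
  exists (H : L -> Prop) (cl : bool), (forall h, H h -> G h) /\ unb lt H /\
    forall x y, H x -> H y -> lt x y -> col x y = cl.
Proof.
  intros WO CT NM Part G col GU.
  assert (Hn : forall x, exists a, G a /\ le_of lt x a /\
                 forall a', G a' -> le_of lt x a' -> ~ lt a' a).
  { intros x. destruct (wf_min lt (proj1 WO) (fun a => G a /\ le_of lt x a)) as [a [[Ga Le] Mn]].
    - destruct (GU x) as [a [Ga Hl]]. exists a. split; auto. left; auto.
    - exists a. repeat split; auto. }
  apply my_choice in Hn. destruct Hn as [n Hn].
  assert (Mono : forall x y, lt x y -> le_of lt (n x) (n y)).
  { intros x y Hxy. destruct (Hn x) as [_ [_ Mx]]. destruct (Hn y) as [Gy [Ly _]].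
    apply (not_lt_le lt WO). apply Mx; auto. left. eapply lt_le_trans; eauto. }
  destruct (Part (fun x y => col (n x) (n y))) as [S [cl [Inj Hom]]].
  pose proof (unb_of_inj lt WO CT NM S Inj) as SU.
  exists (fun a => exists x, S x /\ a = n x), cl. repeat split.
  - intros h [x [_ E]]. subst. apply (Hn x).
  - intros g. destruct (SU g) as [x [Sx Hl]]. exists (n x). split; eauto.
    destruct (Hn x) as [_ [Le _]]. eapply lt_le_trans; eauto.
  - intros a b [x [Sx Ex]] [y [Sy Ey]] Hab. subst.
    destruct WO as [W [T To]] eqn:EW.
    destruct (To x y) as [A|[A|A]].
    + apply Hom; auto.
    + subst. exfalso; exact (wf_irrefl lt W _ Hab).
    + exfalso. destruct (Mono _ _ A) as [B|B].
      * exact (wf_asym lt W _ _ B Hab).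
      * rewrite B in Hab. exact (wf_irrefl lt W _ Hab).
Qed.

Definition totalR {C} (R : C -> C -> Prop) := forall x y, x = y \/ R x y \/ R y x.

Lemma M1 {L} (lt : L -> L -> Prop) {C} (ltC : C -> C -> Prop) : is_wellorder lt ->
  totalR ltC -> PH lt C -> forall (H : L -> Prop) (g : L -> C) m, unb lt H ->
  (forall x y, H x -> H y -> lt m x -> lt x y -> ~ ltC (g y) (g x)) ->
  exists b v, forall x, H x -> lt b x -> g x = v.
Proof.
  intros WO TC PC H g m HU Mo.
  destruct (PC _ (fun h c => g h = c) (unb_tail lt WO H m HU)) as [c Hc]; [eauto|].
  destruct (Hc m) as [x0 [[[H0 L0] E0] _]].
  exists x0, c. intros y Hy Hl.
  assert (lt m y) by (destruct WO as [_ [T _]]; eauto).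
  destruct (TC (g y) c) as [E|[E|E]]; auto.
  - exfalso. apply (Mo x0 y); auto. rewrite E0; auto.
  - exfalso. destruct (Hc y) as [x1 [[[Hx1 L1] E1] Hl1]].
    apply (Mo y x1); auto. rewrite E1; auto.
Qed.

Lemma M2 {L} (lt : L -> L -> Prop) {C} (ltC : C -> C -> Prop) : is_wellorder lt ->
  totalR ltC -> well_founded ltC -> forall (H : L -> Prop) (g : L -> C) m, unb lt H ->
  (forall x y, H x -> H y -> lt m x -> lt x y -> ~ ltC (g x) (g y)) ->
  exists b v, forall x, H x -> lt b x -> g x = v.
Proof.
  intros WO TC WC H g m HU Mo.
  destruct (wf_min ltC WC (fun c => exists h, H h /\ lt m h /\ g h = c)) as [c [[x0 [H0 [L0 E0]]] Mn]].
  { destruct (HU m) as [h [Hh Hl]]. eauto. }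
  exists x0, c. intros y Hy Hl.
  assert (lt m y) by (destruct WO as [_ [T _]]; eauto).
  destruct (TC (g y) c) as [E|[E|E]]; auto.
  - exfalso. apply (Mn (g y)); eauto.
  - exfalso. apply (Mo x0 y); auto. rewrite E0; auto.
Qed.

Lemma eventual {L} (lt : L -> L -> Prop) {C} (ltC : C -> C -> Prop) : is_wellorder lt ->
  (forall x, exists y, lt x y) -> (forall k, PH lt (seg lt k)) ->
  totalR ltC -> well_founded ltC -> PH lt C ->
  forall (I H : L -> Prop) (f : L -> L -> C), unb lt H ->
  let P := fun x y => forall a, I a -> lt a x ->
      (forall a', I a' -> lt a' a -> f a' x = f a' y) -> ~ ltC (f a y) (f a x) in
  ((forall x y, H x -> H y -> lt x y -> P x y) \/
   (forall x y, H x -> H y -> lt x y -> ~ P x y)) ->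
  forall a, I a -> exists b v, forall x, H x -> lt b x -> f a x = v.
Proof.
  intros WO NM PS TC WC PC I H f HU P Hom a.
  induction a as [a IH] using (well_founded_ind (proj1 WO)).
  intros Ia.
  assert (Hb : forall a', exists b, lt a' a -> I a' ->
             exists v, forall x, H x -> lt b x -> f a' x = v).
  { intros a'. destruct (classic (lt a' a /\ I a')) as [[A B]|A].
    - destruct (IH a' A B) as [b Hb]. eauto.
    - exists a. intros; exfalso; tauto. }
  apply my_choice in Hb. destruct Hb as [bf Hbf].
  destruct (bnd_seg lt WO NM PS a bf) as [B HB].
  destruct (mx2 lt WO B a) as [m Hm].
  assert (Key : forall x y, H x -> H y -> lt m x -> lt x y ->
            forall a', I a' -> lt a' a -> f a' x = f a' y).
  { intros x y Hx Hy Lx Lxy a' Ia' La'.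
    destruct (Hbf a' La' Ia') as [v Hv].
    assert (lt (bf a') x).
    { destruct WO as [_ [T _]]. apply (T _ B); auto. apply (Hm x Lx). }
    rewrite (Hv x), (Hv y); auto. destruct WO as [_ [T _]]; eauto. }
  destruct Hom as [Hom|Hom].
  - apply (M1 lt ltC WO TC PC H (f a) m HU).
    intros x y Hx Hy Lx Lxy. apply (Hom x y Hx Hy Lxy); [exact Ia | apply (Hm x Lx) | apply Key; auto].
  - apply (M2 lt ltC WO TC WC H (f a) m HU).
    intros x y Hx Hy Lx Lxy Q.
    apply (Hom x y Hx Hy Lxy). intros a0 Ia0 L0 Pre Q0.
    destruct WO as [W [T To]] eqn:EW.
    destruct (To a0 a) as [A|[A|A]].
    + rewrite (Key x y Hx Hy Lx Lxy a0 Ia0 A) in Q0. exact (wf_irrefl _ WC _ Q0).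
    + subst a0. exact (wf_asym _ WC _ _ Q Q0).
    + rewrite (Pre a Ia A) in Q. exact (wf_irrefl _ WC _ Q).
Qed.

Definition ltPr {A B} (RA : A -> A -> Prop) (RB : B -> B -> Prop) (x y : A * B) : Prop :=
  RA (fst x) (fst y) \/ (fst x = fst y /\ RB (snd x) (snd y)).

Definition ltOpt {A} (R : A -> A -> Prop) (x y : option A) : Prop :=
  match x, y with
  | None, Some _ => True
  | Some a, Some b => R a b
  | _, _ => False
  end.

Lemma wf_pr {A B} (RA : A -> A -> Prop) (RB : B -> B -> Prop) :
  well_founded RA -> well_founded RB -> well_founded (ltPr RA RB).
Proof.
  intros WA WB [a b]. revert b. induction (WA a) as [a _ IHa]. intros b.
  induction (WB b) as [b _ IHb]. constructor. intros [a' b'] [Hl|[E Hl]]; simpl in *.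
  - apply IHa; auto.
  - subst a'. apply IHb; auto.
Qed.

Lemma wf_opt {A} (R : A -> A -> Prop) : well_founded R -> well_founded (ltOpt R).
Proof.
  intros W. assert (AN : Acc (ltOpt R) None) by (constructor; intros [y|] Hy; simpl in Hy; tauto).
  intros [a|]; auto. induction (W a) as [a _ IH]. constructor.
  intros [y|] Hy; simpl in Hy; auto.
Qed.

Lemma tot_pr {A B} (RA : A -> A -> Prop) (RB : B -> B -> Prop) :
  totalR RA -> totalR RB -> totalR (ltPr RA RB).
Proof.
  intros TA TB [a b] [a' b']. unfold ltPr; simpl.
  destruct (TA a a') as [E|[E|E]]; [subst a'|tauto|tauto].
  destruct (TB b b') as [E|[E|E]]; [subst; tauto|tauto|tauto].
Qed.

Lemma tot_opt {A} (R : A -> A -> Prop) : totalR R -> totalR (ltOpt R).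
Proof.
  intros T [a|] [b|]; simpl; auto.
  destruct (T a b) as [E|[E|E]]; [subst|..]; tauto.
Qed.

Lemma tot_seg {L} (lt : L -> L -> Prop) : is_wellorder lt -> forall k,
  totalR (fun x y : seg lt k => lt (proj1_sig x) (proj1_sig y)).
Proof.
  intros [_ [_ To]] k x y. destruct (To (proj1_sig x) (proj1_sig y)) as [E|[E|E]]; auto.
  left; apply seg_eq; auto.
Qed.

Theorem mainTheorem5 (L : Type) (lt : L -> L -> Prop) :
  weakly_compact lt -> strong_system_property lt.
Proof.
  intros [WO [CT [Hinf Part]]] I kappa rho rel
    [HIu [[b0 Hb0] [_ [Htr [Htree [Hup [_ Hstr]]]]]]] _.
  pose proof (nomax lt WO CT Hinf) as NM.
  pose proof (PH_seg lt WO CT NM Part) as PS.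
  assert (IU : unb lt I).
  { intros g. destruct (NM g) as [g' Hg']. destruct (HIu g') as [a [Ia Le]].
    exists a; split; auto. eapply lt_le_trans; eauto. }
  set (C := option (seg lt kappa * seg lt rho)).
  set (ltk := fun x y : seg lt kappa => lt (proj1_sig x) (proj1_sig y)).
  set (ltr := fun x y : seg lt rho => lt (proj1_sig x) (proj1_sig y)).
  set (ltC := ltOpt (ltPr ltk ltr)).
  assert (WC : well_founded ltC).
  { apply wf_opt, wf_pr; exact (wf_inverse_image _ _ lt (fun x => proj1_sig x) (proj1 WO)). }
  assert (TC : totalR ltC) by (apply tot_opt, tot_pr; apply tot_seg; auto).
  assert (PC : PH lt C) by (apply PH_opt; auto; apply PH_prod; auto).
  assert (Hf : forall p : L * L, exists c : C, I (fst p) -> I (snd p) -> lt (fst p) (snd p) ->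
     exists q, c = Some q /\ rel (snd q) (fst p, proj1_sig (fst q)) (snd p, b0)).
  { intros [a0 a1]; simpl. destruct (classic (I a0 /\ I a1 /\ lt a0 a1)) as [[A [B D]]|A].
    - destruct (Hstr a0 a1 b0 A B D Hb0) as [b [r [Hb Hr]]].
      exists (Some (exist _ b Hb, r)). intros _ _ _. eexists; split; [reflexivity|]. exact Hr.
    - exists None. intros; exfalso; tauto. }
  apply my_choice in Hf. destruct Hf as [fC HfC].
  set (f := fun a x => fC (a, x)).
  set (P := fun x y => forall a, I a -> lt a x ->
      (forall a', I a' -> lt a' a -> f a' x = f a' y) -> ~ ltC (f a y) (f a x)).
  set (col := fun x y => if excluded_middle_informative (P x y) then true else false).
  destruct (transfer lt WO CT NM Part I col IU) as [H [cl [HI [HU Hom]]]].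
  assert (EV : forall a, I a -> exists b v, forall x, H x -> lt b x -> f a x = v).
  { apply (eventual lt ltC WO NM PS TC WC PC I H f HU). fold P.
    destruct cl; [left|right]; intros x y Hx Hy Lxy; pose proof (Hom x y Hx Hy Lxy) as Q;
      unfold col in Q; destruct (excluded_middle_informative (P x y)) as [p|p];
      first [exact p | discriminate Q]. }
  destruct (PC I (fun a c => exists b, forall x, H x -> lt b x -> f a x = c) IU) as [c Hc].
  { intros a Ia. destruct (EV a Ia) as [b [v Hv]]. eauto. }
  assert (Get : forall a, I a /\ (exists b, forall x, H x -> lt b x -> f a x = c) ->
             forall z, exists x, H x /\ lt z x /\ lt a x /\ f a x = c).
  { intros a [Ia [b Hb]] z. destruct (mx2 lt WO b a) as [m1 Hm1].
    destruct (mx2 lt WO m1 z) as [m2 Hm2].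
    destruct (HU m2) as [x [Hx Lx]]. destruct (Hm2 x Lx) as [L1 L2].
    destruct (Hm1 x L1). exists x; repeat split; auto. }
  destruct c as [q|].
  2:{ destruct (Hc b0) as [a [Ha _]]. destruct (Get a Ha b0) as [x [Hx [_ [La E]]]].
      destruct (HfC (a, x)) as [q [E2 _]]; simpl; auto; [apply Ha|].
      unfold f in E. congruence. }
  assert (Rel : forall a, I a /\ (exists b, forall x, H x -> lt b x -> f a x = Some q) ->
             forall z, exists x, H x /\ lt z x /\ rel (snd q) (a, proj1_sig (fst q)) (x, b0)).
  { intros a Ha z. destruct (Get a Ha z) as [x [Hx [Lz [La E]]]].
    exists x; repeat split; auto.
    destruct (HfC (a, x)) as [q' [E2 R2]]; simpl; auto; [apply Ha|].
    unfold f in E. rewrite E in E2. injection E2; intros; subst q'. exact R2. }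
  exists (snd q), (fun p => exists a, (I a /\ (exists b, forall x, H x -> lt b x -> f a x = Some q))
                               /\ p = (a, proj1_sig (fst q))).
  assert (RelX : forall a x, I a -> H x -> lt a x -> f a x = Some q ->
            rel (snd q) (a, proj1_sig (fst q)) (x, b0)).
  { intros a x Ia Hx La E.
    destruct (HfC (a, x)) as [q' [E2 R2]]; simpl; auto.
    unfold f in E. rewrite E in E2. injection E2; intros; subst q'. exact R2. }
  split; [|split].
  - intros p0 [a [[Ia _] E]]; subst p0. split; simpl; auto. exact (proj2_sig (fst q)).
  - intros p0 p1 [a [[Ia [b Hb]] E]] [a' [[Ia' [b' Hb']] E']]; subst p0 p1.
    destruct (mx2 lt WO a a') as [m1 Hm1].
    destruct (mx2 lt WO b b') as [m2 Hm2].
    destruct (mx2 lt WO m1 m2) as [m3 Hm3].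
    destruct (HU m3) as [x [Hx Lx]].
    destruct (Hm3 x Lx) as [L1 L2]. destruct (Hm1 x L1). destruct (Hm2 x L2).
    apply (Htree (snd q) _ _ (x, b0)).
    + split; simpl; auto. exact (proj2_sig (fst q)).
    + split; simpl; auto. exact (proj2_sig (fst q)).
    + split; simpl; auto.
    + apply RelX; auto.
    + apply RelX; auto.
  - intros g. destruct (Hc g) as [a [[Ia Ha] Lg]].
    exists a, (proj1_sig (fst q)). split; [left; exact Lg|].
    exists a. split; auto.
Qed.
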